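(* Assume that $\kappa_{\mathcal H}(X_i,X_i)<\infty$ almost surely for every $i$; that for every $y\in\mathcal Y$ the map $u\mapsto\ell(y,u)$ is convex and three times differentiable, $u\mapsto\partial_2\ell(y,u)$ is $\beta_{\ell;2}$-Lipschitz continuous, and $\sup_u|\partial_2^3\ell(y,u)|\le\xi_\ell$; and that $u\mapsto s(y,u)$ is $\gamma$-Lipschitz continuous for every $y$. Then for every $y\in\mathcal Y$, $$|S_{\lambda;D^y}(X_i,Y_i)-\tilde S^{\mathrm{IF}}_{\lambda;D^y}(X_i,Y_i)|\le\tau^{(2)}_{\lambda;i}(y)\ (1\le i\le n),\qquad|S_{\lambda;D^y}(X_{n+1},y)-\tilde S^{\mathrm{IF}}_{\lambda;D^y}(X_{n+1},y)|\le\tau^{(2)}_{\lambda;n+1}(y),$$ where $\tau^{(2)}_{\lambda;i}(y)=\sqrt{K_{i,i}}\sqrt{K_{n+1,n+1}}\min\Big(\frac{\gamma\rho^{(2)}_\lambda(y)}{\lambda^3(n+1)^2},\frac{2\gamma\rho^{(1)}_\lambda(y)}{\lambda(n+1)}\Big)$.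
   Context: Let $\mathcal X\subset\mathbb R^d$, $\mathcal Y\subset\mathbb R$, $D=\{(X_1,Y_1),\dots,(X_n,Y_n)\}$ i.i.d., $(X_{n+1},Y_{n+1})$ independent with the same law; $D^{y'}=D\cup\{(X_{n+1},y')\}$. $\mathcal H$ is an RKHS with kernel $\kappa_{\mathcal H}$, $K_x=\kappa_{\mathcal H}(x,\cdot)$, $K=(\kappa_{\mathcal H}(X_i,X_j))_{1\le i,j\le n+1}$, $\mathcal A=\mathrm{span}\{K_{X_1},\dots,K_{X_{n+1}}\}$. For a loss $\ell$ and $\lambda>0$, $\hat f_{\lambda;D^{y'}}$ minimizes $\frac1{n+1}\sum_{(x,y'')\in D^{y'}}\ell(y'',f(x))+\lambda\|f\|_{\mathcal H}^2$. Fix $z\in\mathcal Y$. Let $H(f)=\frac1{n+1}\sum_{i=1}^n\partial_2^2\ell(Y_i,f(X_i))K_{X_i}\otimes K_{X_i}+\frac1{n+1}\partial_2^2\ell(z,f(X_{n+1}))K_{X_{n+1}}\otimes K_{X_{n+1}}+2\lambda\mathrm{Id}$ with $(g\otimes g)h=\langle g,h\rangle_{\mathcal H}g$ and $H(f)^+$ the inverse of its restriction to $\mathcal A$; $\mathbf I_{\hat f}(X_{n+1},z')=-\frac1{n+1}\partial_2\ell(z',\hat f_{\lambda;D^z}(X_{n+1}))H(\hat f_{\lambda;D^z})^+K_{X_{n+1}}$ and $\tilde f^{\mathrm{IF}}_{\lambda;D^y}=\hat f_{\lambda;D^z}-\mathbf I_{\hat f}(X_{n+1},z)+\mathbf I_{\hat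 f}(X_{n+1},y)$. For $s:\mathcal Y\times\mathcal Y\to\mathbb R_+$: $S_{\lambda;D^y}(X_i,Y_i)=s(Y_i,\hat f_{\lambda;D^y}(X_i))$, $S_{\lambda;D^y}(X_{n+1},y)=s(y,\hat f_{\lambda;D^y}(X_{n+1}))$, $\tilde S^{\mathrm{IF}}_{\lambda;D^y}(X_i,Y_i)=s(Y_i,\tilde f^{\mathrm{IF}}_{\lambda;D^y}(X_i))$ ($i\le n$), $\tilde S^{\mathrm{IF}}_{\lambda;D^y}(X_{n+1},y)=s(y,\tilde f^{\mathrm{IF}}_{\lambda;D^y}(X_{n+1}))$. Further $\rho^{(1)}_\lambda(y)=\frac12|\partial_2\ell(y,\hat f_{\lambda;D^z}(X_{n+1}))-\partial_2\ell(z,\hat f_{\lambda;D^z}(X_{n+1}))|$, $\tilde\rho^{(1)}_\lambda(y)=(1+K_{n+1,n+1}\frac{\beta_{\ell;2}}{\lambda(n+1)})\rho^{(1)}_\lambda(y)$ and $\rho^{(2)}_\lambda(y)=\frac{\xi_\ell}2\sqrt{K_{n+1,n+1}}(\frac1{n+1}\sum_{i=1}^{n+1}K_{i,i}^{3/2})(\tilde\rho^{(1)}_\lambda(y))^2+2\lambda K_{n+1,n+1}\beta_{\ell;2}\tilde\rho^{(1)}_\lambda(y)$. *)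

(* Defs.v *)
From HB Require Import structures.
From mathcomp Require Import all_boot all_order all_algebra.
From mathcomp Require Import all_classical all_reals all_analysis.
Set Implicit Arguments. Unset Strict Implicit. Unset Printing Implicit Defensive.
Import Order.TTheory GRing.Theory Num.Theory.
Local Open Scope ring_scope.

Section Defs.
Variable R : realType.

Definition inner_product (V : lmodType R) (ip : V -> V -> R) : Prop :=
  [/\ forall u v, ip u v = ip v u,
      forall (a : R) u v w, ip (a *: u + v) w = a * ip u w + ip v w,
      forall v, 0 <= ip v v &
      forall v, ip v v = 0 -> v = 0].

(* The RKHS H is modelled as the inner-product space (V, ip) with feature map
   Kf : T -> V (Kf x = K_x); an element f is the function x |-> <f, K_x>
   (reproducing property).  kappa(x, x') = <K_x, K_x'>. *)
Definition ev (V : lmodType R) (ip : V -> V -> R) (T : Type) (Kf : T -> V)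
  (f : V) (x : T) : R := ip f (Kf x).

(* Gram matrix K = (kappa(X_i, X_j))_{i,j <= n+1} (0-based: index ord_max is n+1). *)
Definition kmat (V : lmodType R) (ip : V -> V -> R) (T : Type) (Kf : T -> V)
  n (Xs : 'I_n.+1 -> T) (i j : 'I_n.+1) : R := ip (Kf (Xs i)) (Kf (Xs j)).

(* Labels of D^{y'}: Y_1..Y_n followed by y' at the last position. *)
Definition lab n (Ys : 'I_n -> R) (y : R) (i : 'I_n.+1) : R :=
  match unlift ord_max i with Some j => Ys j | None => y end.

Definition reg_risk (V : lmodType R) (ip : V -> V -> R) (T : Type) (Kf : T -> V)
  (l : R -> R -> R) (lam : R) n (Xs : 'I_n.+1 -> T) (Ys : 'I_n -> R) (y : R)
  (f : V) : R :=
  (n.+1%:R)^-1 * \sum_(i < n.+1) l (lab Ys y i) (ev ip Kf f (Xs i))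
  + lam * ip f f.

Definition is_minimizer (V : Type) (J : V -> R) (f : V) : Prop :=
  forall g, J f <= J g.

Definition hess (V : lmodType R) (ip : V -> V -> R) (T : Type) (Kf : T -> V)
  (l : R -> R -> R) (lam : R) n (Xs : 'I_n.+1 -> T) (Ys : 'I_n -> R) (z : R)
  (f h : V) : V :=
  (n.+1%:R)^-1 *: \sum_(i < n.+1)
     ((derive1n 2 (l (lab Ys z i)) (ev ip Kf f (Xs i)) * ip (Kf (Xs i)) h)
        *: Kf (Xs i))
  + (2 * lam) *: h.

Definition spanA (V : lmodType R) (T : Type) (Kf : T -> V) n
  (Xs : 'I_n.+1 -> T) (h : V) : Prop :=
  exists c : 'I_n.+1 -> R, h = \sum_(i < n.+1) c i *: Kf (Xs i).

(* g = H(f)^+ v : g lies in A and H(f) g = v (unique since H(f) >= 2 lam Id). *)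
Definition is_Hplus_app (V : lmodType R) (ip : V -> V -> R) (T : Type)
  (Kf : T -> V) (l : R -> R -> R) (lam : R) n (Xs : 'I_n.+1 -> T)
  (Ys : 'I_n -> R) (z : R) (f v g : V) : Prop :=
  spanA Kf Xs g /\ hess ip Kf l lam Xs Ys z f g = v.

(* Influence function I_{\hat f}(X_{n+1}, z') with g = H(\hat f_z)^+ K_{X_{n+1}}. *)
Definition infl (V : lmodType R) (ip : V -> V -> R) (T : Type) (Kf : T -> V)
  (l : R -> R -> R) n (Xs : 'I_n.+1 -> T) (fz g : V) (z' : R) : V :=
  (- ((n.+1%:R)^-1 * derive1 (l z') (ev ip Kf fz (Xs ord_max)))) *: g.

Definition f_IF (V : lmodType R) (ip : V -> V -> R) (T : Type) (Kf : T -> V)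
  (l : R -> R -> R) n (Xs : 'I_n.+1 -> T) (fz g : V) (z y : R) : V :=
  fz - infl ip Kf l Xs fz g z + infl ip Kf l Xs fz g y.

Definition rho1 (V : lmodType R) (ip : V -> V -> R) (T : Type) (Kf : T -> V)
  (l : R -> R -> R) n (Xs : 'I_n.+1 -> T) (fz : V) (z y : R) : R :=
  2^-1 * `|derive1 (l y) (ev ip Kf fz (Xs ord_max))
           - derive1 (l z) (ev ip Kf fz (Xs ord_max))|.

Definition rho1t (V : lmodType R) (ip : V -> V -> R) (T : Type) (Kf : T -> V)
  (l : R -> R -> R) (lam beta : R) n (Xs : 'I_n.+1 -> T) (fz : V) (z y : R) : R :=
  (1 + kmat ip Kf Xs ord_max ord_max * (beta / (lam * n.+1%:R)))
  * rho1 ip Kf l Xs fz z y.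

Definition rho2 (V : lmodType R) (ip : V -> V -> R) (T : Type) (Kf : T -> V)
  (l : R -> R -> R) (lam beta xi : R) n (Xs : 'I_n.+1 -> T) (fz : V) (z y : R)
  : R :=
  xi / 2 * Num.sqrt (kmat ip Kf Xs ord_max ord_max)
    * ((n.+1%:R)^-1 * \sum_(i < n.+1) Num.sqrt (kmat ip Kf Xs i i) ^+ 3)
    * (rho1t ip Kf l lam beta Xs fz z y) ^+ 2
  + 2 * lam * kmat ip Kf Xs ord_max ord_max * beta
    * rho1t ip Kf l lam beta Xs fz z y.

Definition tau2 (V : lmodType R) (ip : V -> V -> R) (T : Type) (Kf : T -> V)
  (l : R -> R -> R) (lam beta xi gamma : R) n (Xs : 'I_n.+1 -> T) (fz : V)
  (z y : R) (i : 'I_n.+1) : R :=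
  Num.sqrt (kmat ip Kf Xs i i) * Num.sqrt (kmat ip Kf Xs ord_max ord_max)
  * Num.min (gamma * rho2 ip Kf l lam beta xi Xs fz z y
                / (lam ^+ 3 * n.+1%:R ^+ 2))
            (2 * gamma * rho1 ip Kf l Xs fz z y / (lam * n.+1%:R)).

Definition convex_fun (g : R -> R) : Prop :=
  forall u v (t : R), 0 <= t <= 1 ->
    g (t * u + (1 - t) * v) <= t * g u + (1 - t) * g v.

Definition lipschitz_with (c : R) (g : R -> R) : Prop :=
  forall u v, `|g u - g v| <= c * `|u - v|.

End Defs.

(* Main.v *)
Require Import Defs.
From HB Require Import structures.
From mathcomp Require Import all_boot all_order all_algebra.
From mathcomp Require Import all_classical all_reals all_analysis.
From mathcomp Require Import ring lra.
Import Order.TTheory GRing.Theory Num.Theory.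
Local Open Scope ring_scope.



Section Ana.
Variable R : realType.
Set Implicit Arguments. Unset Strict Implicit.
Implicit Types F G : R -> R.

Lemma lip_ge0 {c : R} {g : R -> R} : lipschitz_with c g -> 0 <= c.
Proof.
move=> H; have := H 1 0; rewrite subr0 normr1 mulr1.
by apply: le_trans; exact: normr_ge0.
Qed.

Lemma mvt2 F : (forall x, derivable F x 1) -> forall u v : R,
  exists c, `|c - u| <= `|v - u| /\ F v - F u = (derive1 F) c * (v - u).
Proof.
move=> dF u v.
have aux : forall a b : R, a <= b -> exists2 c, c \in `[a, b]%R &
    F b - F a = (derive1 F) c * (b - a).
  move=> a b ab; apply: MVT_segment => //.
    by move=> x _; rewrite derive1E; apply: derivableP.
  by apply: derivable_within_continuous => x _; exact: dF.
case: (leP u v) => uv.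
  have [c] := aux u v uv; rewrite in_itv /= => /andP[h1 h2] e.
  exists c; split => //.
  by rewrite !ger0_norm ?subr_ge0 // lerD2r.
have [c] := aux v u (ltW uv); rewrite in_itv /= => /andP[h1 h2] e.
exists c; split; last by rewrite -opprB e -mulrN opprB.
rewrite (ler0_norm (x := v - u)); last by rewrite subr_le0 ltW.
rewrite ler_norml; apply/andP; split; lra.
Qed.

Lemma taylor1 F (b : R) : (forall x, derivable F x 1) ->
  lipschitz_with b (derive1 F) -> forall u v : R,
  `|F v - F u - (derive1 F) u * (v - u)| <= b * (v - u) ^+ 2.
Proof.
move=> dF Hl u v; have b0 := lip_ge0 Hl.
have [c [hc e]] := mvt2 dF u v.
rewrite e -mulrBl normrM.
apply: (le_trans (ler_wpM2r (normr_ge0 _) (Hl c u))).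
rewrite -real_normK ?num_real // expr2 mulrA ler_wpM2r //.
exact: ler_wpM2l.
Qed.

Lemma deriv_lip G (C : R) : (forall x, derivable G x 1) ->
  (forall x, `|(derive1 G) x| <= C) -> lipschitz_with C G.
Proof.
move=> dG HC u v; have [c [_ e]] := mvt2 dG v u.
by rewrite e normrM ler_wpM2r.
Qed.

Lemma small_lem (a b C t0 : R) : 0 < t0 -> 0 <= C ->
  (forall t, 0 < t -> t <= t0 -> a <= b + C * t) -> a <= b.
Proof.
move=> t00 C0 H; rewrite leNgt; apply/negP => ba.
have ab0 : 0 < a - b by rewrite subr_gt0.
have C1 : 0 < C + 1 by lra.
set t := Num.min t0 ((a - b) / (C + 1)).
have tp : 0 < t by rewrite lt_min t00 divr_gt0.
have tt0 : t <= t0 by rewrite ge_min lexx.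
have := H t tp tt0.
have : C * t <= C * ((a - b) / (C + 1)).
  by apply: ler_wpM2l => //; rewrite ge_min lexx orbT.
have : C * ((a - b) / (C + 1)) < a - b.
  rewrite mulrA ltr_pdivrMr //.
  have -> : (a - b) * (C + 1) = C * (a - b) + (a - b) by ring.
  lra.
lra.
Qed.

Lemma deriv_le_lip G (b C : R) : (forall x, derivable G x 1) ->
  lipschitz_with C (derive1 G) -> lipschitz_with b G -> forall x, `|(derive1 G) x| <= b.
Proof.
move=> dG HC Hb x; have C0 := lip_ge0 HC.
apply: (@small_lem _ _ C 1) => // t t0 _.
have h1 := taylor1 dG HC x (x + t).
have h2 := Hb (x + t) x.
have ext : x + t - x = t by ring.
rewrite ext in h1 h2; rewrite (gtr0_norm t0) in h2.
have : `|(derive1 G) x * t| <= `|G (x + t) - G x| + `|G (x + t) - G x - (derive1 G) x * t|.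
  have e := ler_normB (G (x + t) - G x) (G (x + t) - G x - (derive1 G) x * t).
  have ee : G (x + t) - G x - (G (x + t) - G x - (derive1 G) x * t) = (derive1 G) x * t by ring.
  by rewrite ee in e.
rewrite normrM (gtr0_norm t0) => h.
have : `|(derive1 G) x| * t <= (b + C * t) * t.
  rewrite mulrDl -mulrA -expr2. lra.
by rewrite ler_pM2r.
Qed.

Lemma deriv_ge0 G (C : R) : (forall x, derivable G x 1) ->
  lipschitz_with C (derive1 G) -> (forall u v, u <= v -> G u <= G v) ->
  forall x, 0 <= (derive1 G) x.
Proof.
move=> dG HC Hm x; have C0 := lip_ge0 HC.
rewrite -oppr_le0.
apply: (@small_lem _ _ C 1) => // t t0 _.
have h1 := taylor1 dG HC x (x + t).
have ext : x + t - x = t by ring.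
rewrite ext in h1.
have h2 : G x <= G (x + t) by apply: Hm; lra.
move: h1; rewrite ler_norml => /andP[_ h1].
have : - (derive1 G) x * t <= (0 + C * t) * t.
  rewrite mulrDl mul0r add0r -mulrA -expr2 mulNr. lra.
by rewrite ler_pM2r.
Qed.

Lemma conv_mono F (b : R) : convex_fun F -> (forall x, derivable F x 1) ->
  lipschitz_with b (derive1 F) -> forall u v, u <= v -> (derive1 F) u <= (derive1 F) v.
Proof.
move=> cF dF Hl u v; rewrite le_eqVlt => /orP[/eqP -> //|uv].
have b0 := lip_ge0 Hl.
set L := v - u.
have L0 : 0 < L by rewrite subr_gt0.
have c1 : (derive1 F) u * L <= F v - F u.
  apply: (@small_lem _ _ (b * L) L) => //; first exact: mulr_ge0 (ltW L0).
  move=> s s0 sL.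
  have ht : 0 <= s / L <= 1.
    by rewrite divr_ge0 ?(ltW s0) ?(ltW L0) //= ler_pdivrMr // mul1r.
  have := cF v u _ ht.
  have -> : s / L * v + (1 - s / L) * u = u + s.
    rewrite /L; field; rewrite subr_eq0; apply/eqP => e; move: uv; rewrite e ltxx //.
  move=> hc.
  have := taylor1 dF Hl u (u + s).
  have ext : u + s - u = s by ring.
  rewrite ext ler_norml => /andP[h1 _].
  have : (derive1 F) u * L * s <= (F v - F u + b * L * s) * s.
    have e1 : F (u + s) - F u <= s / L * (F v - F u) by lra.
    have e2 : (derive1 F) u * s <= s / L * (F v - F u) + b * s ^+ 2 by lra.
    have := ler_wpM2r (ltW L0) e2.
    have -> : (s / L * (F v - F u) + b * s ^+ 2) * L = (F v - F u + b * L * s) * s.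
      rewrite /L; field; rewrite subr_eq0; apply/eqP => e; move: uv; rewrite e ltxx //.
    by rewrite mulrAC.
  by rewrite ler_pM2r.
have c2 : F v - F u <= (derive1 F) v * L.
  apply: (@small_lem _ _ (b * L) L) => //; first exact: mulr_ge0 (ltW L0).
  move=> s s0 sL.
  have ht : 0 <= s / L <= 1.
    by rewrite divr_ge0 ?(ltW s0) ?(ltW L0) //= ler_pdivrMr // mul1r.
  have := cF u v _ ht.
  have -> : s / L * u + (1 - s / L) * v = v + - s.
    rewrite /L; field; rewrite subr_eq0; apply/eqP => e; move: uv; rewrite e ltxx //.
  move=> hc.
  have := taylor1 dF Hl v (v + - s).
  have ext : v + - s - v = - s by ring.
  rewrite ext sqrrN ler_norml => /andP[h1 _].
  have : (F v - F u) * s <= ((derive1 F) v * L + b * L * s) * s.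
    have e2 : s / L * (F v - F u) <= (derive1 F) v * s + b * s ^+ 2.
      move: h1 hc; rewrite mulrN. lra.
    have := ler_wpM2r (ltW L0) e2.
    have -> : ((derive1 F) v * s + b * s ^+ 2) * L = ((derive1 F) v * L + b * L * s) * s.
      by rewrite expr2; ring.
    have -> : s / L * (F v - F u) * L = (F v - F u) * s.
      rewrite /L; field; rewrite subr_eq0; apply/eqP => e; move: uv; rewrite e ltxx //.
    by [].
  by rewrite ler_pM2r.
have : (derive1 F) u * L <= (derive1 F) v * L by apply: le_trans c2.
by rewrite ler_pM2r.
Qed.

End Ana.



Section IP.
Variables (R : realType) (V : lmodType R) (ip : V -> V -> R).
Hypothesis hip : inner_product ip.
Set Implicit Arguments. Unset Strict Implicit.

Lemma ipC u v : ip u v = ip v u.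
Proof. by case: hip. Qed.

Lemma ipL a u v w : ip (a *: u + v) w = a * ip u w + ip v w.
Proof. by case: hip. Qed.

Lemma ip_ge0 v : 0 <= ip v v.
Proof. by case: hip. Qed.

Lemma ip_eq0 v : ip v v = 0 -> v = 0.
Proof. by case: hip => _ _ _; apply. Qed.

Lemma ip0l w : ip 0 w = 0.
Proof.
have := ipL 1 0 0 w; rewrite scale1r addr0 mul1r => e.
have : ip 0 w - ip 0 w = ip 0 w + ip 0 w - ip 0 w by rewrite -e.
by rewrite subrr addrK.
Qed.

Lemma ipDl u v w : ip (u + v) w = ip u w + ip v w.
Proof. by rewrite -[u]scale1r ipL mul1r scale1r. Qed.

Lemma ipZl a u w : ip (a *: u) w = a * ip u w.
Proof. by rewrite -[a *: u]addr0 ipL ip0l addr0. Qed.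

Lemma ipNl u w : ip (- u) w = - ip u w.
Proof. by rewrite -scaleN1r ipZl mulN1r. Qed.

Lemma ipBl u v w : ip (u - v) w = ip u w - ip v w.
Proof. by rewrite ipDl ipNl. Qed.

Lemma ipDr u v w : ip w (u + v) = ip w u + ip w v.
Proof. by rewrite ipC ipDl !(ipC w). Qed.

Lemma ipZr a u w : ip w (a *: u) = a * ip w u.
Proof. by rewrite ipC ipZl ipC. Qed.

Lemma ipBr u v w : ip w (u - v) = ip w u - ip w v.
Proof. by rewrite ipC ipBl !(ipC w). Qed.

Lemma ip0r w : ip w 0 = 0.
Proof. by rewrite ipC ip0l. Qed.

Lemma ip_suml m (F : 'I_m -> V) w : ip (\sum_(i < m) F i) w = \sum_(i < m) ip (F i) w.
Proof.
by apply: (big_morph (fun u => ip u w)) => [u v|]; [exact: ipDl|exact: ip0l].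
Qed.

Lemma ip_comb m c (a : 'I_m -> R) (k : 'I_m -> V) b u v :
  ip (c *: \sum_(i < m) a i *: k i + b *: u) v =
  c * \sum_(i < m) a i * ip (k i) v + b * ip u v.
Proof.
rewrite ipDl !ipZl ip_suml; congr (_ * _ + _).
by apply: eq_bigr => i _; rewrite ipZl.
Qed.

Definition nrm v := Num.sqrt (ip v v).

Lemma nrm_ge0 v : 0 <= nrm v.
Proof. exact: sqrtr_ge0. Qed.

Lemma nrm_sq v : nrm v ^+ 2 = ip v v.
Proof. by rewrite sqr_sqrtr // ip_ge0. Qed.

Lemma CS u v : `|ip u v| <= nrm u * nrm v.
Proof.
rewrite /nrm -sqrtrM ?ip_ge0 // -sqrtr_sqr ler_sqrt; last first.
  by rewrite mulr_ge0 ?ip_ge0.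
have [v0|vp] := eqVneq (ip v v) 0.
  by rewrite (ip_eq0 v0) ip0r expr0n /= mulr_ge0 ?ip_ge0 // ip0r lexx.
have vv0 : 0 < ip v v by rewrite lt_def vp ip_ge0.
set t := ip u v / ip v v.
have h := ip_ge0 (u - t *: v).
rewrite !ipBl !ipBr !ipZl !ipZr (ipC v u) in h.
have : 0 <= (ip u u - t * ip u v - (t * ip u v - t * (t * ip v v))) * ip v v.
  by rewrite mulr_ge0 // ltW.
have -> : (ip u u - t * ip u v - (t * ip u v - t * (t * ip v v))) * ip v v =
   ip u u * ip v v - ip u v ^+ 2.
  by rewrite /t; field; rewrite vp.
by rewrite subr_ge0.
Qed.

Lemma nrm_tri u v : nrm (u + v) <= nrm u + nrm v.
Proof.
rewrite -[nrm u + nrm v]ger0_norm ?addr_ge0 ?nrm_ge0 // -sqrtr_sqr /nrm ler_sqrt;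
  last exact: sqr_ge0.
rewrite sqrrD -!/(nrm _) !nrm_sq !ipDl !ipDr (ipC v u).
have := CS u v; rewrite ler_norml => /andP[_ h]. lra.
Qed.

Lemma nrmZ a v : nrm (a *: v) = `|a| * nrm v.
Proof.
by rewrite /nrm ipZl ipZr mulrA -expr2 sqrtrM ?sqr_ge0 // sqrtr_sqr.
Qed.

Lemma nrmN v : nrm (- v) = nrm v.
Proof. by rewrite -scaleN1r nrmZ normrN normr1 mul1r. Qed.

End IP.



Section Loss.
Variable R : realType.
Set Implicit Arguments. Unset Strict Implicit.
Variables (L : R -> R) (beta xi : R).
Hypothesis hconv : convex_fun L.
Hypothesis hd0 : forall u, derivable L u 1.
Hypothesis hd1 : forall u, derivable (derive1 L) u 1.
Hypothesis hd2 : forall u, derivable (derive1n 2 L) u 1.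
Hypothesis hlip : lipschitz_with beta (derive1 L).
Hypothesis hxi : forall u, `|derive1n 3 L u| <= xi.

Lemma lip2 : lipschitz_with xi (derive1 (derive1 L)).
Proof. exact: (deriv_lip hd2 hxi). Qed.

Lemma L_mono u v : u <= v -> derive1 L u <= derive1 L v.
Proof. exact: (conv_mono hconv hd0 hlip). Qed.

Lemma L2_ge0 x : 0 <= derive1 (derive1 L) x.
Proof. exact: (deriv_ge0 hd1 lip2 L_mono). Qed.

Lemma L2_le x : `|derive1 (derive1 L) x| <= beta.
Proof. exact: (deriv_le_lip hd1 lip2 hlip). Qed.

Lemma tay1 u v : `|L v - L u - derive1 L u * (v - u)| <= beta * (v - u) ^+ 2.
Proof. exact: (taylor1 hd0 hlip). Qed.

Lemma tay2 u v : `|derive1 L v - derive1 L u - derive1 (derive1 L) u * (v - u)|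
   <= xi * (v - u) ^+ 2.
Proof. exact: (taylor1 hd1 lip2). Qed.

Lemma mono_prod x y : 0 <= (derive1 L x - derive1 L y) * (x - y).
Proof.
case: (leP x y) => h.
  by rewrite -mulrNN !opprB mulr_ge0 // subr_ge0 // L_mono.
by rewrite mulr_ge0 // subr_ge0 // ?L_mono // ltW.
Qed.

End Loss.

Section Alg.
Variable R : realType.

Lemma alg_div (x b c : R) : 0 <= x -> 0 <= b -> 0 < c -> c * x ^+ 2 <= b * x -> x <= b / c.
Proof.
move=> x0 b0 c0 h; rewrite ler_pdivlMr //.
have [->|xp] := eqVneq x 0; first by rewrite mul0r.
have xg : 0 < x by rewrite lt_def xp x0.
rewrite -(ler_pM2r xg); have -> : x * c * x = c * x ^+ 2 by ring.
by [].
Qed.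

Lemma alg_zero (g C : R) : 0 <= C -> (forall t, 0 <= t * g + t ^+ 2 * C) -> g = 0.
Proof.
move=> C0 h; have C1 : 0 < C + 1 by lra.
have := h (- g / (C + 1)).
have -> : - g / (C + 1) * g + (- g / (C + 1)) ^+ 2 * C = - (g ^+ 2 / (C + 1) ^+ 2).
  by field; rewrite gt_eqF.
rewrite oppr_ge0 => h2.
have : 0 <= g ^+ 2 / (C + 1) ^+ 2 by rewrite divr_ge0 ?sqr_ge0.
move=> h3; have : g ^+ 2 / (C + 1) ^+ 2 = 0 by apply/eqP; rewrite eq_le h2 h3.
move/eqP; rewrite mulf_eq0 invr_eq0 !expf_eq0 /= (gt_eqF C1) orbF.
by move/eqP.
Qed.

End Alg.



Section Lab.
Variable R : realType.
Set Implicit Arguments. Unset Strict Implicit.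

Lemma lab_max n (Ys : 'I_n -> R) y : lab Ys y ord_max = y.
Proof. by rewrite /lab unlift_none. Qed.

Lemma lab_neq n (Ys : 'I_n -> R) y z j : j != ord_max -> lab Ys y j = lab Ys z j.
Proof.
by rewrite /lab; case: unliftP => [j' _|->]; rewrite ?eqxx.
Qed.

Lemma lab_Y n (Ys : 'I_n -> R) (Y : set R) y j :
  (forall i, Y (Ys i)) -> Y y -> Y (lab Ys y j).
Proof. by move=> h hy; rewrite /lab; case: unliftP. Qed.

Lemma sum_lab n (Ys : 'I_n -> R) y z (F : 'I_n.+1 -> R -> R) :
  \sum_(j < n.+1) F j (lab Ys y j) =
  \sum_(j < n.+1) F j (lab Ys z j) + (F ord_max y - F ord_max z).
Proof.
rewrite (bigD1 ord_max) //= [in RHS](bigD1 ord_max) //= !lab_max.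
rewrite (eq_bigr (fun j => F j (lab Ys z j))); last first.
  by move=> j hj; rewrite (lab_neq Ys y z hj).
ring.
Qed.

Lemma opt (T : Type) (V : lmodType R) (ip : V -> V -> R) (Kf : T -> V) n
  (Xs : 'I_n.+1 -> T) (Ys : 'I_n -> R) (l : R -> R -> R) (lam beta y' : R) :
  inner_product ip -> 0 < lam -> 0 <= beta ->
  (forall j u v, `|l (lab Ys y' j) v - l (lab Ys y' j) u
      - derive1 (l (lab Ys y' j)) u * (v - u)| <= beta * (v - u) ^+ 2) ->
  forall f, is_minimizer (reg_risk ip Kf l lam Xs Ys y') f ->
  forall v, (n.+1%:R)^-1 * \sum_(j < n.+1) derive1 (l (lab Ys y' j))
     (ip f (Kf (Xs j))) * ip (Kf (Xs j)) v + 2 * lam * ip f v = 0.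
Proof.
move=> hip lam0 b0 htay f hmin h.
set w := (n.+1%:R : R)^-1.
have w0 : 0 <= w by rewrite invr_ge0 ler0n.
set hj := fun j => ip h (Kf (Xs j)).
set fj := fun j => ip f (Kf (Xs j)).
set Lj := fun j => l (lab Ys y' j).
set S := \sum_(j < n.+1) derive1 (Lj j) (fj j) * hj j.
set Q := \sum_(j < n.+1) beta * hj j ^+ 2.
have Q0 : 0 <= Q by apply: sumr_ge0 => j _; rewrite mulr_ge0 // sqr_ge0.
have eS : \sum_(j < n.+1) derive1 (l (lab Ys y' j)) (ip f (Kf (Xs j))) * ip (Kf (Xs j)) h = S.
  by apply: eq_bigr => j _; rewrite [ip (Kf _) h](ipC hip).
rewrite eS.
apply: (@alg_zero _ _ (w * Q + lam * ip h h)).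
  by rewrite addr_ge0 ?mulr_ge0 ?(ltW lam0) ?(ip_ge0 hip).
move=> t.
have hm := hmin (f + t *: h).
rewrite /reg_risk in hm.
have e1 : \sum_(i < n.+1) l (lab Ys y' i) (ev ip Kf (f + t *: h) (Xs i)) =
   \sum_(i < n.+1) Lj i (fj i + t * hj i).
  by apply: eq_bigr => j _; rewrite /ev (ipDl hip) (ipZl hip).
have e2 : ip (f + t *: h) (f + t *: h) = ip f f + 2 * t * ip f h + t ^+ 2 * ip h h.
  rewrite !(ipDl hip) !(ipDr hip) !(ipZl hip) !(ipZr hip) (ipC hip h f). ring.
rewrite e1 e2 in hm.
have e3 : \sum_(i < n.+1) l (lab Ys y' i) (ev ip Kf f (Xs i)) = \sum_(i < n.+1) Lj i (fj i).
  by [].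
rewrite e3 -/w in hm.
have S1 : \sum_(i < n.+1) Lj i (fj i + t * hj i) - \sum_(i < n.+1) Lj i (fj i)
   <= t * S + t ^+ 2 * Q.
  rewrite -sumrB /S /Q !mulr_sumr -big_split /=; apply: ler_sum => j _.
  have := htay j (fj j) (fj j + t * hj j).
  have -> : fj j + t * hj j - fj j = t * hj j by ring.
  rewrite ler_norml => /andP[_ hh].
  rewrite /Lj. lra.
have S2 := ler_wpM2l w0 S1.
lra.
Qed.

End Lab.



Lemma final_alg (R : realType) (lam beta xi gamma N nd ne nkm nki P r1 K rt : R) :
 0 < lam -> 0 < N -> 0 <= beta -> 0 <= xi -> 0 <= gamma -> 0 <= nd -> 0 <= nkm ->
 0 <= nki -> 0 <= P -> 0 <= r1 ->
 K = nkm ^+ 2 -> rt = (1 + K * (beta / (lam * N))) * r1 ->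
 nd <= N^-1 * r1 * nkm / lam ->
 ne <= 2 * N^-1 * r1 * nkm / lam ->
 ne <= N^-1 * (xi * nd ^+ 2 * P + 2 * beta * nd * K) / (2 * lam) ->
 gamma * ne * nki <= nki * nkm * Num.min
   (gamma * (xi / 2 * nkm * (N^-1 * P) * rt ^+ 2 + 2 * lam * K * beta * rt)
      / (lam ^+ 3 * N ^+ 2))
   (2 * gamma * r1 / (lam * N)).
Proof.
move=> l0 N0 b0 x0 g0 nd0 nkm0 nki0 P0 r10 eK ert hnd hA hB.
have K0 : 0 <= K by rewrite eK sqr_ge0.
have lN0 : 0 < lam * N by rewrite mulr_gt0.
have rt1 : r1 <= rt.
  rewrite ert mulrDl mul1r lerDl; apply: mulr_ge0 => //; apply: mulr_ge0 => //.
  exact: divr_ge0 b0 (ltW lN0).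
have rt0 : 0 <= rt by apply: le_trans r10 rt1.
have Ni0 : 0 < N^-1 by rewrite invr_gt0.
set D := N^-1 * rt * nkm / lam.
have hD : nd <= D.
  apply: (le_trans hnd); rewrite /D ler_wpM2r ?invr_ge0 ?(ltW l0) //.
  by rewrite ler_wpM2r // ler_wpM2l // ltW.
have D0 : 0 <= D by apply: le_trans nd0 hD.
have hB2 : ne <= N^-1 * (xi * D ^+ 2 * P + 2 * beta * D * K) / (2 * lam).
  apply: (le_trans hB); rewrite ler_wpM2r ?invr_ge0 ?mulr_ge0 ?(ltW l0) //.
  rewrite ler_wpM2l ?(ltW Ni0) // lerD //.
    rewrite ler_wpM2r // ler_wpM2l //.
    by rewrite lerXn2r ?nnegrE.
  by rewrite ler_wpM2r // ler_wpM2l // mulr_ge0.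
have eq2 : N^-1 * (xi * D ^+ 2 * P + 2 * beta * D * K) / (2 * lam)
   + N^-1 ^+ 2 * beta * rt * nkm * K / lam ^+ 2
   = nkm * ((xi / 2 * nkm * (N^-1 * P) * rt ^+ 2 + 2 * lam * K * beta * rt)
      / (lam ^+ 3 * N ^+ 2)).
  rewrite /D eK; field.
  by rewrite (gt_eqF l0) (gt_eqF N0).
have extra0 : 0 <= N^-1 ^+ 2 * beta * rt * nkm * K / lam ^+ 2.
  apply: divr_ge0; last by rewrite exprn_ge0 // ltW.
  have h1 : 0 <= N^-1 ^+ 2 by rewrite exprn_ge0 // ltW.
  by repeat apply: mulr_ge0 => //.
have B : ne <= nkm * ((xi / 2 * nkm * (N^-1 * P) * rt ^+ 2 + 2 * lam * K * beta * rt)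
      / (lam ^+ 3 * N ^+ 2)).
  rewrite -eq2; apply: (le_trans hB2); by rewrite lerDl.
have A : ne <= nkm * (2 * r1 / (lam * N)).
  apply: (le_trans hA); rewrite le_eqVlt; apply/orP; left; apply/eqP.
  field; by rewrite (gt_eqF l0) (gt_eqF N0).
have ne0 : ne <= ne by [].
set X := (X in Num.min X _); set Y := (Y in Num.min _ Y).
have eX : gamma * ne * nki <= nki * nkm * X.
  have -> : nki * nkm * X = nki * (gamma * (nkm * ((xi / 2 * nkm * (N^-1 * P) * rt ^+ 2
      + 2 * lam * K * beta * rt) / (lam ^+ 3 * N ^+ 2)))) by rewrite /X; ring.
  by rewrite [gamma * ne * nki]mulrC ler_wpM2l // ler_wpM2l.
have eY : gamma * ne * nki <= nki * nkm * Y.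
  have -> : nki * nkm * Y = nki * (gamma * (nkm * (2 * r1 / (lam * N)))) by rewrite /Y; ring.
  by rewrite [gamma * ne * nki]mulrC ler_wpM2l // ler_wpM2l.
rewrite /Order.min; by case: ifP.
Qed.



Theorem theorem21 (R : realType) (T : Type) (V : lmodType R)
  (ip : V -> V -> R) (Kf : T -> V) (n : nat) (Xs : 'I_n.+1 -> T)
  (Ys : 'I_n -> R) (Y : set R) (l s : R -> R -> R)
  (lam beta xi gamma z : R) :
  inner_product ip ->
  0 < lam ->
  (forall i, Y (Ys i)) ->
  Y z ->
  (forall y, Y y -> convex_fun (l y)) ->
  (forall y, Y y -> forall u,
     [/\ derivable (l y) u 1, derivable (derive1 (l y)) u 1
       & derivable (derive1n 2 (l y)) u 1]) ->
  (forall y, Y y -> lipschitz_with beta (derive1 (l y))) ->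
  (forall y, Y y -> forall u, `|derive1n 3 (l y) u| <= xi) ->
  (forall a b, 0 <= s a b) ->
  (forall y, Y y -> lipschitz_with gamma (s y)) ->
  forall fz g : V,
  is_minimizer (reg_risk ip Kf l lam Xs Ys z) fz ->
  is_Hplus_app ip Kf l lam Xs Ys z fz (Kf (Xs ord_max)) g ->
  forall y, Y y ->
  forall fy : V,
  is_minimizer (reg_risk ip Kf l lam Xs Ys y) fy ->
  forall i : 'I_n.+1,
    `|s (lab Ys y i) (ev ip Kf fy (Xs i))
      - s (lab Ys y i) (ev ip Kf (f_IF ip Kf l Xs fz g z y) (Xs i))|
    <= tau2 ip Kf l lam beta xi gamma Xs fz z y i.
Proof.
move=> hip lam0 hYs hz hconv hder hlip hxi hs0 hslip fz g hfz [_ hg] y hy fy hfy i.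
have beta0 : 0 <= beta := lip_ge0 (hlip z hz).
have xi0 : 0 <= xi := le_trans (normr_ge0 _) (hxi z hz 0).
have gam0 : 0 <= gamma := lip_ge0 (hslip z hz).
have d0 : forall y', Y y' -> forall u, derivable (l y') u 1.
  by move=> y' h u; case: (hder y' h u).
have d1 : forall y', Y y' -> forall u, derivable (derive1 (l y')) u 1.
  by move=> y' h u; case: (hder y' h u).
have d2 : forall y', Y y' -> forall u, derivable (derive1n 2 (l y')) u 1.
  by move=> y' h u; case: (hder y' h u).
have lY : forall y', Y y' -> forall j, Y (lab Ys y' j).
  by move=> y' h j; exact: lab_Y.
have optz := opt hip lam0 beta0
  (fun j => tay1 (d0 _ (lY z hz j)) (hlip _ (lY z hz j))) hfz.
have opty := opt hip lam0 beta0
  (fun j => tay1 (d0 _ (lY y hy j)) (hlip _ (lY y hy j))) hfy.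
have N0 : 0 < (n.+1%:R : R) by rewrite ltr0Sn.
set N := (n.+1%:R : R) in N0 optz opty *.
set w := N^-1 in optz opty *.
have w0 : 0 < w by rewrite invr_gt0.
set m := (ord_max : 'I_n.+1) in hg *.
set a := derive1 (l y) (ip fz (Kf (Xs m))) - derive1 (l z) (ip fz (Kf (Xs m))).
(* gradient of y-risk at fz *)
have Gzy : forall v, w * \sum_(j < n.+1) derive1 (l (lab Ys y j)) (ip fz (Kf (Xs j)))
     * ip (Kf (Xs j)) v + 2 * lam * ip fz v = w * a * ip (Kf (Xs m)) v.
  move=> v.
  have := sum_lab Ys y z (fun j c => derive1 (l c) (ip fz (Kf (Xs j))) * ip (Kf (Xs j)) v).
  rewrite /= -/m => ->.
  have := optz v; rewrite /a. lra.
have hH : forall v, w * \sum_(j < n.+1) (derive1n 2 (l (lab Ys z j)) (ip fz (Kf (Xs j)))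
     * ip (Kf (Xs j)) g) * ip (Kf (Xs j)) v + 2 * lam * ip g v = ip (Kf (Xs m)) v.
  move=> v; have := congr1 (fun u => ip u v) hg; rewrite /hess /= (ip_comb hip) -/N -/w.
  by [].
have hIF : f_IF ip Kf l Xs fz g z y = fz - (w * a) *: g.
  rewrite /f_IF /infl -/N -/w -/m /ev -addrA; congr (_ + _).
  rewrite scaleNr opprK scaleNr -scalerBl -[RHS]scaleNr; congr (_ *: _); rewrite /a; ring.
rewrite hIF.
set d := fy - fz.
set e := fy - (fz - (w * a) *: g).
have ed : e = d + (w * a) *: g by rewrite /e /d opprD opprK addrA.
set nk := fun j => nrm ip (Kf (Xs j)).
have nk0 : forall j, 0 <= nk j by move=> j; exact: nrm_ge0.
have dj : forall j, ip (Kf (Xs j)) d = ip fy (Kf (Xs j)) - ip fz (Kf (Xs j)).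
  by move=> j; rewrite (ipBr hip) !(ipC hip (Kf (Xs j))).
have key : forall v, w * \sum_(j < n.+1) (derive1 (l (lab Ys y j)) (ip fy (Kf (Xs j)))
     - derive1 (l (lab Ys y j)) (ip fz (Kf (Xs j)))) * ip (Kf (Xs j)) v
     + 2 * lam * ip d v = - (w * a * ip (Kf (Xs m)) v).
  move=> v; have h1 := opty v; have h2 := Gzy v.
  have e1 : \sum_(j < n.+1) (derive1 (l (lab Ys y j)) (ip fy (Kf (Xs j)))
     - derive1 (l (lab Ys y j)) (ip fz (Kf (Xs j)))) * ip (Kf (Xs j)) v =
     \sum_(j < n.+1) derive1 (l (lab Ys y j)) (ip fy (Kf (Xs j))) * ip (Kf (Xs j)) v -
     \sum_(j < n.+1) derive1 (l (lab Ys y j)) (ip fz (Kf (Xs j))) * ip (Kf (Xs j)) v.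
    by rewrite -sumrB; apply: eq_bigr => j _; rewrite mulrBl.
  rewrite e1 /d (ipBl hip). lra.
have nd0 : 0 <= nrm ip d := nrm_ge0 _ _.
have hnd : nrm ip d <= `|w * a| * nk m / (2 * lam).
  apply: alg_div => //; first by rewrite mulr_ge0.
    by rewrite mulr_gt0.
  have := key d.
  have S0 : 0 <= \sum_(j < n.+1) (derive1 (l (lab Ys y j)) (ip fy (Kf (Xs j)))
     - derive1 (l (lab Ys y j)) (ip fz (Kf (Xs j)))) * ip (Kf (Xs j)) d.
    apply: sumr_ge0 => j _; rewrite dj.
    exact: (mono_prod (hconv _ (lY y hy j)) (d0 _ (lY y hy j)) (hlip _ (lY y hy j))).
  have cs : - (w * a * ip (Kf (Xs m)) d) <= `|w * a| * nk m * nrm ip d.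
    have := ler_norm (- (w * a * ip (Kf (Xs m)) d)); rewrite normrN normrM => h.
    apply: (le_trans h); rewrite -mulrA ler_wpM2l //; exact: CS hip _ _.
  rewrite (nrm_sq hip) => hk.
  have := mulr_ge0 (ltW w0) S0. lra.
have ng : nrm ip g <= nk m / (2 * lam).
  apply: alg_div; [exact: nrm_ge0|exact: nk0|by rewrite mulr_gt0|].
  have := hH g.
  have S0 : 0 <= \sum_(j < n.+1) (derive1n 2 (l (lab Ys z j)) (ip fz (Kf (Xs j)))
     * ip (Kf (Xs j)) g) * ip (Kf (Xs j)) g.
    apply: sumr_ge0 => j _; rewrite -mulrA; apply: mulr_ge0; last by rewrite -expr2 sqr_ge0.
    exact: (L2_ge0 (hconv _ (lY z hz j)) (d0 _ (lY z hz j)) (d1 _ (lY z hz j))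
       (d2 _ (lY z hz j)) (hlip _ (lY z hz j)) (hxi _ (lY z hz j))).
  have cs : ip (Kf (Xs m)) g <= nk m * nrm ip g.
    exact: le_trans (ler_norm _) (CS hip _ _).
  rewrite (nrm_sq hip) => hk.
  have := mulr_ge0 (ltW w0) S0. lra.
have ne0 : 0 <= nrm ip e := nrm_ge0 _ _.
have B1 : nrm ip e <= 2 * w * (2^-1 * `|a|) * nk m / lam.
  rewrite ed; apply: (le_trans (nrm_tri hip _ _)); rewrite (nrmZ hip).
  have h2 := ler_wpM2l (normr_ge0 (w * a)) ng.
  have -> : 2 * w * (2^-1 * `|a|) * nk m / lam =
     `|w * a| * nk m / (2 * lam) + `|w * a| * (nk m / (2 * lam)).
    rewrite normrM (gtr0_norm w0); field; by rewrite (gt_eqF lam0).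
  exact: lerD.
set c := fun j => derive1n 2 (l (lab Ys z j)) (ip fz (Kf (Xs j))) * ip (Kf (Xs j)) d
   - (derive1 (l (lab Ys y j)) (ip fy (Kf (Xs j)))
      - derive1 (l (lab Ys y j)) (ip fz (Kf (Xs j)))).
have iden : forall v, w * \sum_(j < n.+1) (derive1n 2 (l (lab Ys z j)) (ip fz (Kf (Xs j)))
     * ip (Kf (Xs j)) e) * ip (Kf (Xs j)) v + 2 * lam * ip e v
     = w * \sum_(j < n.+1) c j * ip (Kf (Xs j)) v.
  move=> v.
  have e1 : \sum_(j < n.+1) (derive1n 2 (l (lab Ys z j)) (ip fz (Kf (Xs j)))
     * ip (Kf (Xs j)) e) * ip (Kf (Xs j)) v =
     \sum_(j < n.+1) (derive1n 2 (l (lab Ys z j)) (ip fz (Kf (Xs j)))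
     * ip (Kf (Xs j)) d) * ip (Kf (Xs j)) v + (w * a) *
     \sum_(j < n.+1) (derive1n 2 (l (lab Ys z j)) (ip fz (Kf (Xs j)))
     * ip (Kf (Xs j)) g) * ip (Kf (Xs j)) v.
    rewrite mulr_sumr -big_split; apply: eq_bigr => j _.
    rewrite ed (ipDr hip) (ipZr hip) /=; ring.
  have e2 : \sum_(j < n.+1) c j * ip (Kf (Xs j)) v =
     \sum_(j < n.+1) (derive1n 2 (l (lab Ys z j)) (ip fz (Kf (Xs j)))
     * ip (Kf (Xs j)) d) * ip (Kf (Xs j)) v -
     \sum_(j < n.+1) (derive1 (l (lab Ys y j)) (ip fy (Kf (Xs j)))
     - derive1 (l (lab Ys y j)) (ip fz (Kf (Xs j)))) * ip (Kf (Xs j)) v.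
    rewrite -sumrB; apply: eq_bigr => j _; rewrite /c; ring.
  have e3 : ip e v = ip d v + w * a * ip g v by rewrite ed (ipDl hip) (ipZl hip).
  rewrite e1 e2 e3.
  have hh := hH v; have hk := key v.
  rewrite -hh in hk. lra.
set P := \sum_(j < n.+1) nk j ^+ 3.
set K := nk m ^+ 2.
have cb : \sum_(j < n.+1) `|c j| * nk j <= xi * nrm ip d ^+ 2 * P + 2 * beta * nrm ip d * K.
  have hm : `|c m| * nk m <= xi * nrm ip d ^+ 2 * nk m ^+ 3 + 2 * beta * nrm ip d * K.
    have ht : `|ip (Kf (Xs m)) d| <= nk m * nrm ip d by exact: CS hip _ _.
    have hc : `|c m| <= 2 * beta * `|ip (Kf (Xs m)) d|.
      rewrite /c !lab_max.
      have h1 : `|derive1n 2 (l z) (ip fz (Kf (Xs m)))| <= beta :=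
        L2_le (d1 _ hz) (d2 _ hz) (hlip _ hz) (hxi _ hz) _.
      have h2 := hlip y hy (ip fy (Kf (Xs m))) (ip fz (Kf (Xs m))).
      rewrite -dj in h2.
      apply: (le_trans (ler_normB _ _)); rewrite normrM.
      have := ler_wpM2r (normr_ge0 (ip (Kf (Xs m)) d)) h1. lra.
    have h3 : `|c m| * nk m <= 2 * beta * (nk m * nrm ip d) * nk m.
      apply: ler_wpM2r => //; apply: (le_trans hc); apply: ler_wpM2l => //; exact: mulr_ge0.
    have h4 : 0 <= xi * nrm ip d ^+ 2 * nk m ^+ 3.
      by rewrite !mulr_ge0 ?exprn_ge0.
    have -> : 2 * beta * nrm ip d * K = 2 * beta * (nk m * nrm ip d) * nk m.
      by rewrite /K; ring.
    lra.
  have hr : \sum_(j < n.+1 | j != m) `|c j| * nk j <=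
      \sum_(j < n.+1 | j != m) xi * nrm ip d ^+ 2 * nk j ^+ 3.
    apply: ler_sum => j hj.
    have ht : `|ip (Kf (Xs j)) d| <= nk j * nrm ip d by exact: CS hip _ _.
    have hc : `|c j| <= xi * ip (Kf (Xs j)) d ^+ 2.
      rewrite /c (lab_neq Ys y z hj).
      have := tay2 (d1 _ (lY z hz j)) (d2 _ (lY z hz j)) (hxi _ (lY z hz j))
         (ip fz (Kf (Xs j))) (ip fy (Kf (Xs j))).
      rewrite -dj -normrN.
      have -> : - (derive1 (l (lab Ys z j)) (ip fy (Kf (Xs j))) -
        derive1 (l (lab Ys z j)) (ip fz (Kf (Xs j))) -
        derive1 (derive1 (l (lab Ys z j))) (ip fz (Kf (Xs j))) * ip (Kf (Xs j)) d) =
        derive1n 2 (l (lab Ys z j)) (ip fz (Kf (Xs j))) * ip (Kf (Xs j)) d -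
        (derive1 (l (lab Ys z j)) (ip fy (Kf (Xs j))) -
         derive1 (l (lab Ys z j)) (ip fz (Kf (Xs j)))) by rewrite /=; ring.
      by [].
    have h5 : ip (Kf (Xs j)) d ^+ 2 <= (nk j * nrm ip d) ^+ 2.
      rewrite -real_normK ?num_real //; apply: lerXn2r; rewrite ?nnegrE //.
      exact: mulr_ge0.
    have h6 : `|c j| <= xi * (nk j * nrm ip d) ^+ 2.
      apply: (le_trans hc); exact: ler_wpM2l.
    have := ler_wpM2r (nk0 j) h6.
    have -> : xi * (nk j * nrm ip d) ^+ 2 * nk j = xi * nrm ip d ^+ 2 * nk j ^+ 3 by ring.
    by [].
  rewrite (bigD1 m) //= /P [\sum_(j < n.+1) nk j ^+ 3](bigD1 m) //=.
  move: hr; rewrite -mulr_sumr => hr.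
  lra.
have P0 : 0 <= P by apply: sumr_ge0 => j _; rewrite exprn_ge0.
have K0 : 0 <= K by rewrite exprn_ge0.
have B2 : nrm ip e <= w * (xi * nrm ip d ^+ 2 * P + 2 * beta * nrm ip d * K) / (2 * lam).
  apply: alg_div => //.
      apply: mulr_ge0; first exact: ltW.
      by rewrite addr_ge0 // !mulr_ge0 // exprn_ge0.
    by rewrite mulr_gt0.
  have hE := iden e.
  have S0 : 0 <= \sum_(j < n.+1) (derive1n 2 (l (lab Ys z j)) (ip fz (Kf (Xs j)))
     * ip (Kf (Xs j)) e) * ip (Kf (Xs j)) e.
    apply: sumr_ge0 => j _; rewrite -mulrA; apply: mulr_ge0; last by rewrite -expr2 sqr_ge0.
    exact: (L2_ge0 (hconv _ (lY z hz j)) (d0 _ (lY z hz j)) (d1 _ (lY z hz j))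
       (d2 _ (lY z hz j)) (hlip _ (lY z hz j)) (hxi _ (lY z hz j))).
  have sc : \sum_(j < n.+1) c j * ip (Kf (Xs j)) e <=
      (\sum_(j < n.+1) `|c j| * nk j) * nrm ip e.
    rewrite mulr_suml; apply: ler_sum => j _.
    apply: (le_trans (ler_norm _)); rewrite normrM -mulrA ler_wpM2l //.
    exact: CS hip _ _.
  have sc2 := ler_wpM2r ne0 cb.
  have sc3 := le_trans sc sc2.
  have sc4 := ler_wpM2l (ltW w0) sc3.
  have S1 := mulr_ge0 (ltW w0) S0.
  rewrite [nrm ip e ^+ 2](nrm_sq hip).
  lra.
have hs := hslip (lab Ys y i) (lY y hy i) (ev ip Kf fy (Xs i))
  (ev ip Kf (fz - (w * a) *: g) (Xs i)).
have eve : ev ip Kf fy (Xs i) - ev ip Kf (fz - (w * a) *: g) (Xs i) = ip e (Kf (Xs i)).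
  by rewrite /ev /e [RHS](ipBl hip).
rewrite eve in hs.
apply: (le_trans hs).
apply: (le_trans (ler_wpM2l gam0 (CS hip e (Kf (Xs i))))).
rewrite mulrA.
have eK : kmat ip Kf Xs m m = nk m ^+ 2 by rewrite /nk (nrm_sq hip).
have hnd' : nrm ip d <= N^-1 * rho1 ip Kf l Xs fz z y * nk m / lam.
  apply: (le_trans hnd); rewrite le_eqVlt; apply/orP; left; apply/eqP.
  rewrite /rho1 -/m /ev -/a normrM (gtr0_norm w0); rewrite /w; field.
  rewrite (gt_eqF lam0) /=; have h1 : (0 : R) < 1 + n%:R by rewrite addrC natr1 ltr0Sn.
  by rewrite (gt_eqF h1).
have r10 : 0 <= rho1 ip Kf l Xs fz z y by rewrite /rho1 mulr_ge0.
have B2' : nrm ip e <= N^-1 * (xi * nrm ip d ^+ 2 * P + 2 * beta * nrm ip d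
   * kmat ip Kf Xs m m) / (2 * lam) by rewrite eK.
apply: (@final_alg R lam beta xi gamma N (nrm ip d) (nrm ip e) (nk m) (nk i) P
  (rho1 ip Kf l Xs fz z y) (kmat ip Kf Xs m m) (rho1t ip Kf l lam beta Xs fz z y)
  lam0 N0 beta0 xi0 gam0 nd0 (nk0 m) (nk0 i) P0 r10 eK erefl hnd' B1 B2').
Qed.
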